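(* Let $F/E$ be a finite field extension and assume that either $F/E$ is quadratic, or $F/E$ has prime degree $p$ and $E$ has no nontrivial finite extension of degree prime to $p$. Then $K^{MW}_*(F)$ is generated as a left $K^{MW}_*(E)$-module (via restriction) by the elements $[\beta]$, $\beta\in F^\times$ (together with $1$).
   Context: $K^{MW}_*(F)$ is Morel's Milnor–Witt K-theory: the $\mathbb{Z}$-graded ring generated by symbols $[a]$ ($a\in F^\times$, degree $1$) and $\eta$ (degree $-1$) subject to $[a][1-a]=0$, $[ab]=[a]+[b]+\eta[a][b]$, $\eta[a]=[a]\eta$, $\eta(2+\eta[-1])=0$. It is a $K^{MW}_*(E)$-module via the restriction ring map $K^{MW}_*(E)\to K^{MW}_*(F)$. *)

(* Defs.v *)
From HB Require Import structures.
From mathcomp Require Import all_boot all_order all_algebra vector falgebra fieldext.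
Set Implicit Arguments. Unset Strict Implicit. Unset Printing Implicit Defensive.
Import GRing.Theory.
Local Open Scope ring_scope.

(* Milnor–Witt K-theory K^MW_*(K) of a field K, presented by generators and
   relations.  We use the total (ungraded) associative unital ring; since all
   relations are homogeneous, it is the direct sum of the graded pieces. *)

Definition unitF (K : fieldType) := {x : K | x != 0}.

Inductive mwterm (K : fieldType) : Type :=
| MWsym  of unitF K              (* the symbol [a], degree 1 *)
| MWeta                           (* eta, degree -1 *)
| MW0
| MW1
| MWadd  of mwterm K & mwterm K
| MWopp  of mwterm K
| MWmul  of mwterm K & mwterm K.

Arguments MWeta {K}. Arguments MW0 {K}. Arguments MW1 {K}.

Definition MW2 {K : fieldType} : mwterm K := MWadd MW1 MW1.

Inductive mweq (K : fieldType) : mwterm K -> mwterm K -> Prop :=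
| mweq_refl x : mweq x x
| mweq_sym x y : mweq x y -> mweq y x
| mweq_trans x y z : mweq x y -> mweq y z -> mweq x z
| mweq_add x x' y y' : mweq x x' -> mweq y y' -> mweq (MWadd x y) (MWadd x' y')
| mweq_opp x x' : mweq x x' -> mweq (MWopp x) (MWopp x')
| mweq_mul x x' y y' : mweq x x' -> mweq y y' -> mweq (MWmul x y) (MWmul x' y')
| mweq_addA x y z : mweq (MWadd x (MWadd y z)) (MWadd (MWadd x y) z)
| mweq_addC x y : mweq (MWadd x y) (MWadd y x)
| mweq_add0 x : mweq (MWadd MW0 x) x
| mweq_addN x : mweq (MWadd (MWopp x) x) MW0
| mweq_mulA x y z : mweq (MWmul x (MWmul y z)) (MWmul (MWmul x y) z)
| mweq_mul1l x : mweq (MWmul MW1 x) x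
| mweq_mul1r x : mweq (MWmul x MW1) x
| mweq_mulDl x y z : mweq (MWmul (MWadd x y) z) (MWadd (MWmul x z) (MWmul y z))
| mweq_mulDr x y z : mweq (MWmul x (MWadd y z)) (MWadd (MWmul x y) (MWmul x z))
| mweq_steinberg (a b : unitF K) : val a + val b = 1 ->
    mweq (MWmul (MWsym a) (MWsym b)) MW0
| mweq_symM (a b c : unitF K) : val c = val a * val b ->
    mweq (MWsym c)
         (MWadd (MWadd (MWsym a) (MWsym b)) (MWmul MWeta (MWmul (MWsym a) (MWsym b))))
| mweq_etaC (a : unitF K) : mweq (MWmul MWeta (MWsym a)) (MWmul (MWsym a) MWeta)
| mweq_hyp (m : unitF K) : val m = -1 ->
    mweq (MWmul MWeta (MWadd MW2 (MWmul MWeta (MWsym m)))) MW0.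

Section Restriction.
Variables (E : fieldType) (F : fieldExtType E).

Lemma in_alg_neq0 (a : unitF E) : (val a)%:A != 0 :> F.
Proof. by rewrite -in_algE fmorph_eq0; exact: valP a. Qed.

Definition res_unit (a : unitF E) : unitF F := exist (fun x : F => x != 0) ((val a)%:A) (in_alg_neq0 a).

Fixpoint mwres (t : mwterm E) : mwterm F :=
  match t with
  | MWsym a => MWsym (res_unit a)
  | MWeta => MWeta
  | MW0 => MW0
  | MW1 => MW1
  | MWadd x y => MWadd (mwres x) (mwres y)
  | MWopp x => MWopp (mwres x)
  | MWmul x y => MWmul (mwres x) (mwres y)
  end.
End Restriction.

Definition mwsum (K : fieldType) (s : seq (mwterm K)) : mwterm K :=
  foldr (@MWadd K) MW0 s.

Definition mwgen (K : fieldType) (o : option (unitF K)) : mwterm K :=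
  if o is Some b then MWsym b else MW1.

(* Main.v *)
Require Import Defs.
From HB Require Import structures.
From mathcomp Require Import all_boot all_order all_algebra vector falgebra fieldext.
From mathcomp Require Import qpoly qfpoly ring.
From mathcomp Require boolp.
Set Implicit Arguments. Unset Strict Implicit. Unset Printing Implicit Defensive.
Import GRing.Theory.
Local Open Scope ring_scope.

Section Quot.
Variable K : fieldType.
Local Notation T := (mwterm K).

Definition Qt : Type := {P : T -> Prop | exists t, P = mweq t}.
Definition qpi (t : T) : Qt := exist _ (mweq t) (ex_intro _ t erefl).
Definition qrepr (q : Qt) : T := proj1_sig (boolp.cid (proj2_sig q)).

Lemma sig_eqP (P Q : T -> Prop) hP hQ : P = Q ->
  exist (fun P => exists t, P = mweq t) P hP = exist _ Q hQ.
Proof. move=> e; subst; congr exist; exact: boolp.Prop_irrelevance. Qed.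

Lemma qreprK q : qpi (qrepr q) = q.
Proof.
case: q => P hP; rewrite /qrepr /qpi /=; case: (boolp.cid hP) => r e /=.
by apply: sig_eqP.
Qed.

Lemma eqpi t u : qpi t = qpi u <-> mweq t u.
Proof.
split.
  move=> e; have := congr1 (fun q : Qt => proj1_sig q u) e => /= ->.
  exact: mweq_refl.
move=> h; apply: sig_eqP; apply: boolp.funext => x; apply: boolp.propext.
split=> h'; first exact: mweq_trans (mweq_sym h) h'.
exact: mweq_trans h h'.
Qed.

Lemma qrepr_pi t : mweq (qrepr (qpi t)) t.
Proof. by apply/eqpi; rewrite qreprK. Qed.

Definition qadd q r := qpi (MWadd (qrepr q) (qrepr r)).
Definition qmul q r := qpi (MWmul (qrepr q) (qrepr r)).
Definition qopp q := qpi (MWopp (qrepr q)).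
Notation q0 := (qpi MW0).
Notation q1 := (qpi MW1).

Lemma qaddE x y : qpi (MWadd x y) = qadd (qpi x) (qpi y).
Proof. apply/eqpi; apply: mweq_add; apply: mweq_sym; exact: qrepr_pi. Qed.
Lemma qmulE x y : qpi (MWmul x y) = qmul (qpi x) (qpi y).
Proof. apply/eqpi; apply: mweq_mul; apply: mweq_sym; exact: qrepr_pi. Qed.
Lemma qoppE x : qpi (MWopp x) = qopp (qpi x).
Proof. apply/eqpi; apply: mweq_opp; apply: mweq_sym; exact: qrepr_pi. Qed.

Lemma qind (P : Qt -> Prop) : (forall t, P (qpi t)) -> forall q, P q.
Proof. by move=> h q; rewrite -(qreprK q). Qed.

HB.instance Definition _ := boolp.gen_eqMixin Qt.
HB.instance Definition _ := boolp.gen_choiceMixin Qt.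

Local Notation RP := (qrepr_pi _).
Local Notation RPs := (mweq_sym (qrepr_pi _)).
Local Notation Rf := (mweq_refl _).
Lemma qaddA : associative qadd.
Proof. move=> a b c; apply/eqpi; apply: mweq_trans (mweq_add Rf RP) _; apply: mweq_trans (mweq_addA _ _ _) _; exact: mweq_add RPs Rf. Qed.
Lemma qaddC : commutative qadd.
Proof. move=> a b; apply/eqpi; exact: mweq_addC. Qed.
Lemma qadd0 : left_id q0 qadd.
Proof. move=> a; rewrite /qadd -{2}(qreprK a); apply/eqpi; apply: mweq_trans (mweq_add RP Rf) _; exact: mweq_add0. Qed.
Lemma qaddN : left_inverse q0 qopp qadd.
Proof. move=> a; apply/eqpi; apply: mweq_trans (mweq_add RP Rf) _; exact: mweq_addN. Qed.
Lemma qmulA : associative qmul.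
Proof. move=> a b c; apply/eqpi; apply: mweq_trans (mweq_mul Rf RP) _; apply: mweq_trans (mweq_mulA _ _ _) _; exact: mweq_mul RPs Rf. Qed.
Lemma qmul1l : left_id q1 qmul.
Proof. move=> a; rewrite /qmul -{2}(qreprK a); apply/eqpi; apply: mweq_trans (mweq_mul RP Rf) _; exact: mweq_mul1l. Qed.
Lemma qmul1r : right_id q1 qmul.
Proof. move=> a; rewrite /qmul -{2}(qreprK a); apply/eqpi; apply: mweq_trans (mweq_mul Rf RP) _; exact: mweq_mul1r. Qed.
Lemma qmulDl : left_distributive qmul qadd.
Proof. move=> a b c; apply/eqpi; apply: mweq_trans (mweq_mul RP Rf) _; apply: mweq_trans (mweq_mulDl _ _ _) _; exact: mweq_add RPs RPs. Qed.
Lemma qmulDr : right_distributive qmul qadd.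
Proof. move=> a b c; apply/eqpi; apply: mweq_trans (mweq_mul Rf RP) _; apply: mweq_trans (mweq_mulDr _ _ _) _; exact: mweq_add RPs RPs. Qed.

HB.instance Definition _ := GRing.isPzRing.Build Qt qaddA qaddC qadd0 qaddN
  qmulA qmul1l qmul1r qmulDl qmulDr.

Lemma piD x y : qpi (MWadd x y) = qpi x + qpi y. Proof. exact: qaddE. Qed.
Lemma piM x y : qpi (MWmul x y) = qpi x * qpi y. Proof. exact: qmulE. Qed.
Lemma piN x : qpi (MWopp x) = - qpi x. Proof. exact: qoppE. Qed.
Lemma pi0 : qpi MW0 = 0. Proof. by []. Qed.
Lemma pi1 : qpi MW1 = 1. Proof. by []. Qed.
End Quot.



Section MW.
Variables (R : pzRingType) (F : fieldType) (s : F -> R) (e : R).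
Hypothesis St : forall a, a != 0 -> a != 1 -> s a * s (1 - a) = 0.
Hypothesis SM : forall a b, a != 0 -> b != 0 -> s (a * b) = s a + s b + e * (s a * s b).
Hypothesis EC : forall a, e * s a = s a * e.
Hypothesis H : e * (1 + 1 + e * s (-1)) = 0.

Lemma s1 : s 1 = 0.
Proof.
set x := s 1; set m := s (-1).
have n1 : (-1 : F) != 0 by rewrite oppr_eq0 oner_neq0.
have h1 : x = x + x + e * (x * x) by rewrite /x -SM ?mulr1 ?oner_neq0.
have h2 : x = m + m + e * (m * m) by rewrite /x /m -SM // mulrNN mulr1.
have ex : e * x = 0.
  have -> : e * x = e * (1 + 1 + e * m) * m by rewrite h2 !mulrDr !mulrDl !mulr1 ?mul1r !mulrA.
  by rewrite H mul0r.
have : x + e * (x * x) = 0.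
  by apply: (addrI x); rewrite addr0 addrA -h1.
by rewrite mulrA ex mul0r addr0.
Qed.

Fact br_key : unit. Proof. exact: tt. Qed.
Definition br a := locked_with br_key (1 + e * s a).
Lemma brdef a : br a = 1 + e * s a. Proof. by rewrite /br unlock. Qed.

Lemma eC2 a b : a != 0 -> b != 0 -> e * (s a * s b) = e * (s b * s a).
Proof.
move=> a0 b0; have := SM a0 b0; rewrite mulrC SM // => /eqP.
by rewrite [s b + s a]addrC (inj_eq (addrI _)) => /eqP ->.
Qed.

Lemma brC a b : a != 0 -> b != 0 -> br a * s b = s b * br a.
Proof.
move=> a0 b0; rewrite !brdef mulrDl mulrDr mul1r mulr1; congr (_ + _).
by rewrite -mulrA eC2 // mulrA EC -mulrA.
Qed.

Lemma brE a : br a * e = e * br a.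
Proof. by rewrite !brdef mulrDl mulrDr mul1r mulr1 -mulrA -EC mulrA. Qed.

Lemma sML a b : a != 0 -> b != 0 -> s (a * b) = s a + br a * s b.
Proof. by move=> a0 b0; rewrite SM // !brdef mulrDl mul1r addrA mulrA. Qed.

Lemma sMR a b : a != 0 -> b != 0 -> s (a * b) = s b + s a * br b.
Proof.
by move=> a0 b0; rewrite SM // !brdef mulrDr mulr1 [s a * (e * s b)]mulrA -EC -mulrA addrA [s b + s a]addrC.
Qed.

Lemma brM a b : a != 0 -> b != 0 -> br (a * b) = br a * br b.
Proof.
move=> a0 b0; rewrite !brdef SM // !mulrDr !mulrDl !mul1r !mulr1 !addrA.
congr (_ + _); rewrite !mulrA -[e * s a * e]mulrA -EC mulrA //.
Qed.

Lemma br1 : br 1 = 1.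
Proof. by rewrite !brdef s1 mulr0 addr0. Qed.

Lemma brV a : a != 0 -> br a * br a^-1 = 1.
Proof. by move=> a0; rewrite -brM ?invr_eq0 // mulfV // br1. Qed.

Lemma brVl a : a != 0 -> br a^-1 * br a = 1.
Proof. by move=> a0; rewrite -brM ?invr_eq0 // mulVf // br1. Qed.

Lemma sV a : a != 0 -> s a = - (br a * s a^-1).
Proof.
move=> a0; apply/eqP; rewrite -addr_eq0 -sML ?invr_eq0 // mulfV // s1 //.
Qed.


Lemma sN a : a != 0 -> s a * s (- a) = 0.
Proof.
move=> a0; have [->|a1] := eqVneq a 1; first by rewrite s1 mul0r.
have na0 : - a != 0 by rewrite oppr_eq0.
have ai0 : a^-1 != 0 by rewrite invr_eq0.
have ai1 : a^-1 != 1 by apply: contra a1 => /eqP h; rewrite -[a]invrK h invr1.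
have b0 : 1 - a != 0 by rewrite subr_eq0 eq_sym.
have d0 : 1 - a^-1 != 0 by rewrite subr_eq0 eq_sym.
have eb : 1 - a = (- a) * (1 - a^-1) by field.
have h1 : s a * s (1 - a) = 0 by exact: St.
have h2 : s a * s (1 - a^-1) = 0.
  by rewrite (sV a0) mulNr -mulrA St // mulr0 oppr0.
have h3 : s a * s (- a) * br (1 - a^-1) = 0.
  move: h1; rewrite eb sMR // mulrDr h2 add0r mulrA //.
by rewrite -[s a * _]mulr1 -(brV d0) mulrA h3 mul0r.
Qed.

Lemma sComm a b : a != 0 -> b != 0 -> s b * s a = - (br (-1) * (s a * s b)).
Proof.
move=> a0 b0.
have ab0 : a * b != 0 by rewrite mulf_neq0.
have na0 : - a != 0 by rewrite oppr_eq0.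
have nb0 : - b != 0 by rewrite oppr_eq0.
have n10 : (-1 : F) != 0 by rewrite oppr_eq0 oner_neq0.
have h := sN ab0.
have e1 : - (a * b) = (- a) * b by rewrite mulNr.
have e2 : - (a * b) = a * (- b) by rewrite mulrN.
have k1 : s a * s (- (a * b)) = br (- a) * (s a * s b).
  by rewrite e1 sML // mulrDr sN // add0r mulrA -brC // mulrA.
have k2 : s b * s (- (a * b)) = s b * s a.
  by rewrite e2 sML // mulrDr mulrA -brC // -mulrA sN // mulr0 addr0.
move: h; rewrite sML // mulrDl k1 -mulrA k2 => h.
have : br a^-1 * (br (- a) * (s a * s b) + br a * (s b * s a)) = 0 by rewrite h mulr0.
rewrite mulrDr !mulrA -brM ?invr_eq0 // brVl // mul1r.
have -> : a^-1 * - a = -1 by rewrite mulrN mulVf.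
by move/eqP; rewrite addrC addr_eq0 => /eqP ->.
Qed.

Lemma brN1 : br (-1) * br (-1) = 1.
Proof.
have n10 : (-1 : F) != 0 by rewrite oppr_eq0 oner_neq0.
by rewrite -brM // mulrNN mulr1 br1.
Qed.

Lemma sSq a : a != 0 -> s a * s a = s (-1) * s a.
Proof.
move=> a0.
have n10 : (-1 : F) != 0 by rewrite oppr_eq0 oner_neq0.
have h := sN a0; move: h.
rewrite -[- a]mulN1r sML // mulrDr mulrA -brC // -mulrA.
rewrite (sComm n10 a0) => /eqP; rewrite addrC addr_eq0 opprK => /eqP h.
by rewrite -[s a * s a]mul1r -brN1 -mulrA h mulrA brN1 mul1r.
Qed.

Lemma sLin x y k k' : x != 0 -> y != 0 -> k != 0 -> k' != 0 -> x * k != 1 ->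
  1 - x * k = y * k' ->
  s x * s y = - (br k^-1 * br k'^-1 *
     (s k * s k' + br k' * s k * s y + br k * (s x * s k'))).
Proof.
move=> x0 y0 k0 k'0 u1 eu.
have u0 : x * k != 0 by rewrite mulf_neq0.
have h := St u0 u1; rewrite eu !sMR // in h.
set T := _ + _ + _.
have E1 : (s k + s x * br k) * (s k' + s y * br k') = T + br k * br k' * (s x * s y).
  rewrite mulrDl !mulrDr /T !addrA; congr (_ + _ + _ + _).
  - by rewrite -(brC k'0 y0) mulrA -brC.
  - by rewrite -(brC k0 x0) mulrA.
  - by rewrite -(brC k0 x0) -(brC k'0 y0) !mulrA -[br k * s x * br k']mulrA -(brC k'0 x0) mulrA.
rewrite E1 in h; move/eqP: h; rewrite addrC addr_eq0 => /eqP h.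
have brcomm : br k'^-1 * br k = br k * br k'^-1 by rewrite -!brM ?invr_eq0 // mulrC.
have key : br k^-1 * br k'^-1 * (br k * br k') = 1.
  by rewrite mulrA -[br k^-1 * br k'^-1 * br k]mulrA brcomm mulrA brVl // mul1r brVl.
have hT : T = - (br k * br k' * (s x * s y)) by rewrite h opprK.
by rewrite hT mulrN opprK mulrA key mul1r.
Qed.
End MW.


Section Fld.
Import Pdiv.Field.
Variables (E : fieldType).

Lemma root_lin (f : {poly E}) : size f = 2%N -> exists a, root f a.
Proof.
move=> hs.
have f1 : f`_1 != 0.
  have : lead_coef f != 0 by rewrite lead_coef_eq0 -size_poly_gt0 hs.
  by rewrite lead_coefE hs.
exists (- f`_0 / f`_1); rewrite /root horner_coef hs big_ord_recl big_ord1 /=.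
rewrite expr0 expr1 mulr1; apply/eqP; rewrite /bump /=; field; exact: f1.
Qed.

Lemma exists_root_prime (n : nat) (pn : prime n)
  (Hc : forall L : fieldExtType E,
      coprime (\dim (fullv : {vspace L})) n -> (\dim (fullv : {vspace L}))%N = 1%N) :
  forall f : {poly E}, (1 < size f)%N -> (size f <= n)%N -> exists a, root f a.
Proof.
move=> f; move: {2}(size f) (leqnn (size f)) => m; elim: m f => [|m IH] f hm h1 hn.
  by move: (leq_trans h1 hm).
have f0 : f != 0 by rewrite -size_poly_gt0 (ltn_trans _ h1).
have [irr|nirr] := boolp.pselect (irreducible_poly f).
  set g := (lead_coef f)^-1 *: f.
  have lf0 : (lead_coef f)^-1 != 0 by rewrite invr_eq0 lead_coef_eq0.
  have gf : g %= f by apply: eqp_scale.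
  have sg : size g = size f by rewrite size_scale.
  have mg : g \is monic by rewrite monicE lead_coefZ mulVf // lead_coef_eq0.
  have ig : irreducible_poly g.
    split; first by rewrite sg.
    move=> q q1 qg; have qf : q %| f by rewrite -(eqp_dvdr _ gf).
    by apply: (eqp_trans (irr.2 q q1 qf)); rewrite eqp_sym.
  have hI : monic_irreducible_poly g by split.
  have dL : \dim (fullv : {vspace {poly %/ g with hI}}) = (size g).-1.
    by rewrite -[in RHS](mk_monicE hI); exact: dim_polyn.
  have := Hc {poly %/ g with hI}; rewrite dL sg.
  have cp : coprime (size f).-1 n.
    rewrite coprime_sym prime_coprime // gtnNdvd //.
      by rewrite -ltnS prednK // (ltn_trans _ h1).
    by rewrite (leq_trans _ hn) // prednK // (ltn_trans _ h1).
  move=> /(_ cp) h2; apply: root_lin.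
  have : (size f).-1.+1 = 2%N by rewrite h2.
  by rewrite prednK // (ltn_trans _ h1).
have [q [q1 [qf nqf]]] : exists q : {poly E}, size q != 1%N /\ q %| f /\ ~ (q %= f).
  apply: boolp.contrapT => hq; apply: nirr; split => // q q1 qf.
  by apply: boolp.contrapT => nq; apply: hq; exists q.
have q0 : q != 0 by apply/eqP => e0; move: qf; rewrite e0 dvd0p (negPf f0).
have sq1 : (1 < size q)%N.
  by rewrite ltn_neqAle eq_sym q1 size_poly_gt0.
have sqf : (size q < size f)%N.
  rewrite ltn_neqAle dvdp_leq // andbT (dvdp_size_eqp qf).
  by apply/negP.
have sqm : (size q <= m)%N by rewrite -ltnS (leq_trans sqf hm).
have [a ra] := IH q sqm sq1 (leq_trans (ltnW sqf) hn).
by exists a; apply: root_dvdp qf ra.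
Qed.

Variable (F : fieldExtType E).
Local Notation n := (\dim (fullv : {vspace F})).

Inductive good (al : F) : F -> Prop :=
| gc (c : E) : c != 0 -> good al (c%:A)
| gl (a : E) (b : F) : good al b -> good al ((al - a%:A) * b).

Lemma good_poly (al : F)
  (Hroot : forall f : {poly E}, (1 < size f)%N -> (size f <= n)%N -> exists a, root f a) :
  forall f : {poly E}, (size f <= n)%N -> (map_poly (in_alg F) f).[al] != 0 ->
     good al (map_poly (in_alg F) f).[al].
Proof.
move=> f; move: {2}(size f) (leqnn (size f)) => m; elim: m f => [|m IH] f hm hn.
  by move: hm; rewrite leqn0 size_poly_eq0 => /eqP ->; rewrite rmorph0 horner0 eqxx.
have [s1|s1] := leqP (size f) 1.
  have [c ->] : exists c, f = c%:P by exists f`_0; exact: size1_polyC.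
  rewrite map_polyC hornerC /= => c0; apply: gc.
  by apply: contra_neq c0 => ->; rewrite scale0r.
have [a ra] := Hroot f s1 hn.
have [g fg] := factor_theorem _ _ ra.
have f0 : f != 0 by rewrite -size_poly_gt0 (ltn_trans _ s1).
have g0 : g != 0 by apply/eqP => g0; move: f0; rewrite fg g0 mul0r eqxx.
have sg : size f = (size g).+1 by rewrite fg size_Mmonic ?monicXsubC // size_XsubC addn2.
rewrite fg rmorphM /= map_polyXsubC hornerM hornerXsubC mulrC /= => h0.
apply: gl; apply: IH.
- by rewrite -ltnS -sg.
- by rewrite (leq_trans (leqnSn _)) // -sg.
- by move: h0; rewrite mulf_eq0 negb_or => /andP[].
Qed.

Lemma exists_gen (pn : prime n)
  (Hroot : forall f : {poly E}, (1 < size f)%N -> (size f <= n)%N -> exists a, root f a) :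
  exists al : F, (forall a : E, al != a%:A) /\ forall b : F, b != 0 -> good al b.
Proof.
have [al alK] : exists al : F, al \notin (1%VS : {vspace F}).
  apply: boolp.contrapT => h.
  have sub : (fullv <= (1%VS : {vspace F}))%VS.
    apply/subvP => x _; apply: boolp.contrapT => hx; apply: h; exists x; exact/negP.
  have := dimvS sub; rewrite dimv1 => h1.
  by have := prime_gt1 pn; rewrite ltnNge h1.
exists al; split.
  move=> a; apply: contra alK => /eqP ->.
  by rewrite memvZ // mem1v.
set K := (1%AS : {subfield F}).
have dK : \dim K = 1%N by rewrite dimv1.
set d := adjoin_degree (asval K) al.
have dn : (d %| n)%N.
  have := field_dimS (subvf <<K; al>>%AS); by rewrite dim_Fadjoin dK muln1.
have d1 : d != 1%N by rewrite adjoin_deg_eq1.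
have dn' : d = n.
  have [_ /(_ d dn)] := primeP pn; by rewrite (negPf d1) => /eqP.
have full : (<<K; al>>%VS = fullv).
  apply/eqP; rewrite eqEdim subvf dim_Fadjoin dK muln1 /=.
  have -> : adjoin_degree 1 al = d by []. by rewrite dn'.
move=> b b0.
have bin : b \in <<K; al>>%VS by rewrite full memvf.
have [f pf] := polyOver1P (Fadjoin_polyOver (asval K) al b).
have := Fadjoin_poly_eq bin; rewrite pf => hb.
rewrite -hb; apply: good_poly => //.
  by rewrite -(size_map_poly (in_alg F)) -pf -dn' size_Fadjoin_poly.
by rewrite hb.
Qed.
End Fld.


Section Main.
Variables (E : fieldType) (F : fieldExtType E).
Local Notation Q := (Qt F).

Definition sF (x : F) : Q := if insub x is Some u then qpi (MWsym u) else 0.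
Definition eF : Q := qpi MWeta.

Lemma sE (u : unitF F) : sF (val u) = qpi (MWsym u).
Proof. by rewrite /sF valK. Qed.

Lemma sF0 : sF 0 = 0.
Proof. by rewrite /sF insubF // eqxx. Qed.

Lemma sEx (a : F) (a0 : a != 0) : sF a = qpi (MWsym (exist _ a a0)).
Proof. exact: (sE (exist _ a a0)). Qed.

Lemma St_F (a : F) : a != 0 -> a != 1 -> sF a * sF (1 - a) = 0.
Proof.
move=> a0 a1; have b0 : 1 - a != 0 by rewrite subr_eq0 eq_sym.
rewrite (sEx a0) (sEx b0) -pi0 -piM; apply/eqpi; apply: mweq_steinberg => /=.
by rewrite addrC subrK.
Qed.

Lemma SM_F (a b : F) : a != 0 -> b != 0 -> sF (a * b) = sF a + sF b + eF * (sF a * sF b).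
Proof.
move=> a0 b0; have c0 : a * b != 0 by rewrite mulf_neq0.
rewrite (sEx a0) (sEx b0) (sEx c0) /eF.
set u := exist _ a a0; set v := exist _ b b0.
have -> : qpi (MWsym u) + qpi (MWsym v) + qpi MWeta * (qpi (MWsym u) * qpi (MWsym v)) =
  qpi (MWadd (MWadd (MWsym u) (MWsym v)) (MWmul MWeta (MWmul (MWsym u) (MWsym v)))).
  by rewrite !piD !piM.
by apply/eqpi; exact: mweq_symM.
Qed.

Lemma EC_F (a : F) : eF * sF a = sF a * eF.
Proof.
have [->|a0] := eqVneq a 0; first by rewrite sF0 mulr0 mul0r.
by rewrite (sEx a0) /eF -[LHS]piM -[RHS]piM; apply/eqpi; exact: mweq_etaC.
Qed.

Lemma H_F : eF * (1 + 1 + eF * sF (-1)) = 0.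
Proof.
have m0 : (-1 : F) != 0 by rewrite oppr_eq0 oner_neq0.
rewrite (sEx m0) /eF.
have -> : qpi MWeta * (1 + 1 + qpi MWeta * qpi (MWsym (exist (fun x : F => x != 0) (-1) m0)))
   = qpi (MWmul MWeta (MWadd MW2 (MWmul MWeta (MWsym (exist (fun x : F => x != 0) (-1) m0))))).
  by rewrite piM piD piD piM pi1.
by rewrite -pi0; apply/eqpi; exact: mweq_hyp.
Qed.

Ltac mwh := first [exact: St_F | exact: SM_F | exact: EC_F | exact: H_F].

Local Notation brF := (br sF eF).

Lemma sCommF a b : a != 0 -> b != 0 -> sF b * sF a = - (brF (-1) * (sF a * sF b)).
Proof. by move=> a0 b0; apply: sComm => //; mwh. Qed.
Lemma sSqF a : a != 0 -> sF a * sF a = sF (-1) * sF a.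
Proof. by move=> a0; apply: sSq => //; mwh. Qed.
Lemma sLinF x y k k' : x != 0 -> y != 0 -> k != 0 -> k' != 0 -> x * k != 1 ->
  1 - x * k = y * k' ->
  sF x * sF y = - (brF k^-1 * brF k'^-1 *
     (sF k * sF k' + brF k' * sF k * sF y + brF k * (sF x * sF k'))).
Proof. by move=> *; apply: sLin => //; mwh. Qed.


Definition rs (y : mwterm E) : Q := qpi (mwres F y).
Definition inR (q : Q) := exists y, q = rs y.

Lemma inR0 : inR 0. Proof. by exists MW0. Qed.
Lemma inR1 : inR 1. Proof. by exists MW1. Qed.
Lemma inRe : inR eF. Proof. by exists MWeta. Qed.
Lemma inRD p q : inR p -> inR q -> inR (p + q).
Proof. by move=> [y ->] [z ->]; exists (MWadd y z); rewrite /rs /= piD. Qed.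
Lemma inRM p q : inR p -> inR q -> inR (p * q).
Proof. by move=> [y ->] [z ->]; exists (MWmul y z); rewrite /rs /= piM. Qed.
Lemma inRN p : inR p -> inR (- p).
Proof. by move=> [y ->]; exists (MWopp y); rewrite /rs /= piN. Qed.
Lemma inRs (c : E) : inR (sF (in_alg F c)).
Proof.
have [->|c0] := eqVneq c 0; first by rewrite rmorph0 sF0; exact: inR0.
exists (MWsym (exist _ c c0)); rewrite /rs /= -sE //.
Qed.
Lemma inRbr (c : E) : inR (brF (in_alg F c)).
Proof. by rewrite brdef; apply: inRD inR1 (inRM inRe (inRs c)). Qed.
Lemma inRsN1 : inR (sF (-1)).
Proof. by have := inRs (-1); rewrite rmorphN1. Qed.
Lemma inRbrN1 : inR (brF (-1)).
Proof. by have := inRbr (-1); rewrite rmorphN1. Qed.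

Variables (al : F) (alE : forall a : E, al != a%:A).
Local Notation lin a := (al - in_alg F a).

Lemma lin0 a : lin a != 0.
Proof. by rewrite subr_eq0; exact: alE. Qed.

Inductive Ml : Q -> Prop :=
| Ml0 : Ml 0
| Mlr r : inR r -> Ml r
| Mls r a : inR r -> Ml (r * sF (lin a))
| MlD p q : Ml p -> Ml q -> Ml (p + q).

Lemma MlN p : Ml p -> Ml (- p).
Proof.
elim=> [|r hr|r a hr|p' q _ hp _ hq].
- by rewrite oppr0; exact: Ml0.
- exact/Mlr/inRN.
- by rewrite -mulNr; apply/Mls/inRN.
- by rewrite opprD; exact: MlD.
Qed.

Lemma MlL t p : inR t -> Ml p -> Ml (t * p).
Proof.
move=> ht; elim=> [|r hr|r a hr|p' q _ hp _ hq].
- by rewrite mulr0; exact: Ml0.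
- exact/Mlr/inRM.
- by rewrite mulrA; apply/Mls/inRM.
- by rewrite mulrDr; exact: MlD.
Qed.

Lemma MlRgen (c : Q) : (forall r, inR r -> Ml (r * c)) ->
  (forall r a, inR r -> Ml (r * sF (lin a) * c)) -> forall m, Ml m -> Ml (m * c).
Proof.
move=> h1 h2 m; elim=> [|r hr|r a hr|p' q _ hp _ hq].
- by rewrite mul0r; exact: Ml0.
- exact: h1.
- exact: h2.
- by rewrite mulrDl; exact: MlD.
Qed.

Lemma Mle m : Ml m -> Ml (m * eF).
Proof.
apply: MlRgen => [r hr|r a hr]; first by apply/Mlr/inRM => //; exact: inRe.
by rewrite -mulrA -EC_F mulrA; apply/Mls/inRM => //; exact: inRe.
Qed.

Lemma sconst_neq0 (c : E) : c != 0 -> in_alg F c != 0.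
Proof. by move=> c0; rewrite fmorph_eq0. Qed.

Lemma MlC (c : E) m : Ml m -> Ml (m * sF (in_alg F c)).
Proof.
have [->|c0] := eqVneq c 0.
  by rewrite rmorph0 sF0 mulr0 => _; exact: Ml0.
apply: MlRgen => [r hr|r a hr]; first by apply/Mlr/inRM => //; exact: inRs.
rewrite -mulrA sCommF ?lin0 ?sconst_neq0 // mulrN mulrA mulrA -mulNr.
apply/Mls/inRN/inRM; last exact: inRs.
by apply: inRM => //; exact: inRbrN1.
Qed.

Lemma Mlpair a a' : Ml (sF (lin a') * sF (lin a)).
Proof.
have [<-|aa] := eqVneq a a'.
  by rewrite sSqF ?lin0 //; apply: Mls; exact: inRsN1.
set A := in_alg F a; set A' := in_alg F a'.
have dA : A - A' != 0.
  by rewrite subr_eq0 /A /A' (inj_eq (fmorph_inj _)).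
have dA' : A' - A != 0 by rewrite subr_eq0 eq_sym -subr_eq0.
set k := (A - A')^-1; set k' := (A' - A)^-1.
have k0 : k != 0 by rewrite invr_eq0.
have k'0 : k' != 0 by rewrite invr_eq0.
have hk : k = in_alg F (a - a')^-1 by rewrite fmorphV rmorphB.
have hk' : k' = in_alg F (a' - a)^-1 by rewrite fmorphV rmorphB.
have hki : k^-1 = in_alg F (a - a') by rewrite /k invrK rmorphB.
have hk'i : k'^-1 = in_alg F (a' - a) by rewrite /k' invrK rmorphB.
have u1 : lin a' * k != 1.
  apply/negP => /eqP h; have := congr1 (fun z => z * (A - A')) h.
  rewrite mul1r /k mulfVK // => /(congr1 (fun z => z + A')); rewrite !subrK => h'.
  by have := alE a; rewrite h' eqxx.
have eu : 1 - lin a' * k = lin a * k'.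
  rewrite /k /k' -/A -/A'; field; by rewrite dA dA'.
rewrite (sLinF (lin0 a') (lin0 a) k0 k'0 u1 eu).
apply: MlN; apply: MlL; first by apply: inRM; rewrite ?hki ?hk'i; exact: inRbr.
apply: MlD; first apply: MlD.
- by apply: Mlr; apply: inRM; rewrite ?hk ?hk'; exact: inRs.
- by apply: Mls; apply: inRM; rewrite ?hk ?hk'; [exact: inRbr|exact: inRs].
- rewrite sCommF ?lin0 // mulrN mulrA mulrA -mulNr; apply: Mls.
  apply/inRN/inRM; last by rewrite hk'; exact: inRs.
  by apply: inRM; [rewrite hk; exact: inRbr|exact: inRbrN1].
Qed.

Lemma MlX a m : Ml m -> Ml (m * sF (lin a)).
Proof.
apply: MlRgen => [r hr|r a' hr]; first exact: Mls.
by rewrite -mulrA; apply: MlL => //; exact: Mlpair.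
Qed.

Lemma good_neq0 b : good al b -> b != 0.
Proof.
elim=> [c c0|a b' _ hb]; first exact: sconst_neq0.
by rewrite mulf_neq0 ?lin0.
Qed.

Lemma MlG b : good al b -> forall m, Ml m -> Ml (m * sF b).
Proof.
elim=> [c c0|a b' gb IH] m hm; first exact: MlC.
rewrite SM_F ?lin0 ?good_neq0 // !mulrDr.
apply: MlD; first apply: MlD.
- exact: MlX.
- exact: IH.
- rewrite !mulrA; apply: IH; apply: MlX; exact: Mle.
Qed.

Lemma MlT (t : mwterm F) : (forall b : F, b != 0 -> good al b) -> forall m, Ml m -> Ml (m * qpi t).
Proof.
move=> hg; elim: t => [u||||x IHx y IHy|x IHx|x IHx y IHy] m hm.
- rewrite -sE; apply: MlG => //; apply: hg; exact: (valP u).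
- exact: Mle.
- by rewrite pi0 mulr0; exact: Ml0.
- by rewrite pi1 mulr1.
- by rewrite piD mulrDr; apply: MlD; [exact: IHx|exact: IHy].
- by rewrite piN mulrN; apply: MlN; exact: IHx.
- by rewrite piM mulrA; apply: IHy; exact: IHx.
Qed.


Definition msum (s : seq (mwterm E * option (unitF F))) : mwterm F :=
  mwsum [seq MWmul (mwres F x.1) (mwgen x.2) | x <- s].

Lemma msum_cat s1 s2 : qpi (msum (s1 ++ s2)) = qpi (msum s1) + qpi (msum s2).
Proof.
elim: s1 => [|x s1 IH] /=; first by rewrite /msum /= pi0 add0r.
by rewrite /msum /= !piD -/(msum _) IH addrA.
Qed.

Lemma MlS q : Ml q -> exists s, q = qpi (msum s).
Proof.
elim=> [|r [y ->]|r a [y ->]|p1 q1 _ [s1 ->] _ [s2 ->]].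
- by exists [::].
- by exists [:: (y, None)]; rewrite /msum /= piD piM pi0 pi1 mulr1 addr0.
- exists [:: (y, Some (exist _ (lin a) (lin0 a)))].
  by rewrite /msum /= piD piM pi0 addr0 -sEx.
- by exists (s1 ++ s2); rewrite msum_cat.
Qed.

End Main.

Theorem mainTheorem11 (E : fieldType) (F : fieldExtType E) :
  ((\dim (fullv : {vspace F}))%N = 2%N \/
   (prime (\dim (fullv : {vspace F})) /\
    forall L : fieldExtType E,
      coprime (\dim (fullv : {vspace L})) (\dim (fullv : {vspace F})) ->
      (\dim (fullv : {vspace L}))%N = 1%N)) ->
  forall t : mwterm F,
    exists s : seq (mwterm E * option (unitF F)),
      mweq t (mwsum [seq MWmul (mwres F x.1) (mwgen x.2) | x <- s]).
Proof.
move=> hyp t.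
have [pn Hroot] : prime (\dim (fullv : {vspace F})) /\
  (forall f : {poly E}, (1 < size f)%N -> (size f <= \dim (fullv : {vspace F}))%N ->
     exists a, root f a).
  case: hyp => [h2|[pn Hc]].
    split; first by rewrite h2.
    move=> f h1 hn; apply: root_lin; rewrite h2 in hn.
    by apply/eqP; rewrite eqn_leq hn h1.
  by split => //; exact: exists_root_prime.
have [al [alE hg]] := exists_gen pn Hroot.
have := MlT alE t hg (Mlr al (inR1 F)); rewrite mul1r.
move=> /(MlS alE) [s hs]; exists s; exact/eqpi.
Qed.
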